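(* Let $\lambda\in\mathbf{C}$ with $\lambda\neq1$. For every $n\in\mathbf{Z}_{+}$ (nonnegative integers), \[ \frac{1}{n+1}\sum_{k=0}^{n}H_{k}(x\vert\lambda)H_{n-k}(x\vert\lambda) =\sum_{k=0}^{n-1}\frac{\binom{n}{k}}{n-k+1}\Bigl\{-\lambda\sum_{l=k}^{n}H_{l-k}(\lambda)H_{n-l}(\lambda)+2\lambda H_{n-k}(\lambda)\Bigr\}H_{k}(x\vert\lambda)+H_{n}(x\vert\lambda). \]
   Context: For $\lambda\in\mathbf{C}$, $\lambda\neq1$, the Frobenius–Euler polynomials $H_n(x\vert\lambda)$ are defined by the generating function $\frac{1-\lambda}{e^{t}-\lambda}e^{xt}=\sum_{n=0}^{\infty}H_{n}(x\vert\lambda)\frac{t^{n}}{n!}$, and the Frobenius–Euler numbers are $H_n(\lambda)=H_n(0\vert\lambda)$. An empty sum (e.g. when $n=0$) is $0$. *)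

(* Defs.v *)
From HB Require Import structures.
From mathcomp Require Import all_boot all_order all_algebra.
From mathcomp Require Import reals.
From mathcomp.real_closed Require Import complex.
Set Implicit Arguments. Unset Strict Implicit. Unset Printing Implicit Defensive.
Import Order.TTheory GRing.Theory Num.Theory.
Local Open Scope ring_scope.

(* [FE_gen lam H] says that [H n x] (playing the role of H_n(x|lam)) is given
   by the generating function
       (1 - lam) / (e^t - lam) * e^(x t) = \sum_n H_n(x|lam) t^n / n!,
   read as an identity of formal (exponential) power series in t, i.e.
       (e^t - lam) * \sum_n H_n(x|lam) t^n/n! = (1 - lam) e^(x t).
   Comparing the coefficients of t^n / n! on both sides (Cauchy product of
   exponential generating functions) gives exactly the identity below, for
   every x and every n. Since lam <> 1 it determines H uniquely. *)
Definition FE_gen (R : realType) (lam : R[i]) (H : nat -> R[i] -> R[i]) : Prop :=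
  forall (x : R[i]) (n : nat),
    \sum_(k < n.+1) 'C(n, k)%:R * H k x - lam * H n x = (1 - lam) * x ^+ n.

Definition FE_num (R : realType) (H : nat -> R[i] -> R[i]) (n : nat) : R[i] := H n 0.

(* Main.v *)
Require Import Defs.
From HB Require Import structures.
From mathcomp Require Import all_boot all_order all_algebra.
From mathcomp Require Import reals.
From mathcomp.real_closed Require Import complex.
From mathcomp Require Import zify ring lra.
Set Implicit Arguments. Unset Strict Implicit. Unset Printing Implicit Defensive.
Import Order.TTheory GRing.Theory Num.Theory.
Local Open Scope ring_scope.

Section Appell.
Variable F : numFieldType.

Definition appell (P : nat -> {poly F}) := forall n, (P n)^`() = n%:R *: P n.-1.

Definition conv (c : nat -> F) (P : nat -> {poly F}) n :=
  \sum_(k < n.+1) ('C(n, k)%:R * c (n - k)%N) *: P k.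

Lemma appell_conv c P : appell P -> appell (conv c P).
Proof.
move=> hP; rewrite /appell in hP *; move=> [|m]; rewrite /conv.
  by rewrite big_ord_recl big_ord0 addr0 linearZ /= hP !scale0r scaler0.
rewrite linear_sum /= big_ord_recl /= linearZ /= hP scale0r scaler0 add0r scaler_sumr.
apply: eq_bigr => k _; rewrite linearZ /= hP !scalerA /bump /= add1n subSS.
congr (_ *: _).
have := mul_bin_diag m.+1 k => /= /(congr1 (fun t => t%:R : F)).
rewrite !natrM => e.
by rewrite mulrC mulrA -e mulrA.
Qed.

Lemma appell_X : appell (fun n => 'X^n).
Proof. by move=> n; rewrite derivXn scaler_nat. Qed.

Lemma appell_add P Q : appell P -> appell Q -> appell (fun n => P n + Q n).
Proof. by move=> hP hQ n; rewrite /appell in hP hQ; rewrite derivD hP hQ scalerDr. Qed.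

Lemma appell_scale a P : appell P -> appell (fun n => a *: P n).
Proof. by move=> hP n; rewrite /appell in hP; rewrite derivZ hP !scalerA mulrC. Qed.

Definition sprod (P Q : nat -> {poly F}) n :=
  \sum_(a < n.+1) P a * Q (n - a)%N.

Lemma deriv_sprod P Q m : appell P -> appell Q ->
  (sprod P Q m.+1)^`() = m.+2%:R *: sprod P Q m.
Proof.
move=> hP hQ; rewrite /appell in hP hQ; rewrite /sprod linear_sum /=.
under eq_bigr => a _ do rewrite derivM hP hQ.
rewrite big_split /= [X in X + _]big_ord_recl [X in _ + X]big_ord_recr /= subn0 subnn !scale0r mul0r mulr0.
rewrite add0r addr0 scaler_sumr -big_split /=; apply: eq_bigr => a _.
rewrite /bump /= add1n subSS -scalerAl -scalerAr add0n.
have -> : (m.+1 - a).-1 = (m - a)%N by have := ltn_ord a; lia.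
rewrite -scalerDl -natrD; congr (_%:R *: _); have := ltn_ord a; lia.
Qed.

Lemma appell_sprod P Q : appell P -> appell Q ->
  appell (fun n => (n.+1%:R)^-1 *: sprod P Q n).
Proof.
move=> hP hQ; have dd := deriv_sprod _ hP hQ; rewrite /appell in hP hQ *; move=> [|m].
  rewrite /= derivZ /sprod big_ord_recl big_ord0 addr0 derivM hP hQ.
  by rewrite !scale0r mul0r mulr0 addr0 scaler0.
rewrite /= linearZ /= dd scalerA mulVf ?pnatr_eq0 // scale1r.
by rewrite scalerA mulfV ?pnatr_eq0 // scale1r.
Qed.

Lemma deriv0_const (p : {poly F}) : p^`() = 0 -> p = (p`_0)%:P.
Proof.
move=> h; apply/polyP => [[|i]]; rewrite coefC //=.
have := congr1 (fun q : {poly F} => q`_i) h; rewrite coef_deriv coef0 => /eqP.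
by rewrite mulrn_eq0 /= => /eqP.
Qed.

Variable lam : F.
Definition Phi (p : {poly F}) := p.[1] - lam * p.[0].

Lemma Phi_add (p q : {poly F}) : Phi (p + q) = Phi p + Phi q.
Proof. by rewrite /Phi !hornerD; ring. Qed.

Lemma Phi_scale (a : F) (p : {poly F}) : Phi (a *: p) = a * Phi p.
Proof. by rewrite /Phi !hornerZ; ring. Qed.

Lemma phi0 (p : {poly F}) : lam != 1 -> p^`() = 0 -> Phi p = 0 -> p = 0.
Proof.
move=> hl /deriv0_const hd; rewrite /Phi hd !hornerC => e.
have : (1 - lam) * p`_0 = 0 by rewrite -[RHS]e; ring.
by move/eqP; rewrite mulf_eq0 subr_eq0 eq_sym (negbTE hl) /= => /eqP ->; rewrite polyC0.
Qed.

Lemma appell_uniq P Q : lam != 1 -> appell P -> appell Q ->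
  (forall n, Phi (P n) = Phi (Q n)) -> forall n, P n = Q n.
Proof.
move=> hl hP hQ hPhi; rewrite /appell in hP hQ; elim=> [|n IH];
  apply/eqP; rewrite -subr_eq0; apply/eqP; apply: phi0 => //.
- by rewrite derivB hP hQ !scale0r subrr.
- transitivity (Phi (P 0%N) - Phi (Q 0%N)); last by rewrite hPhi subrr.
  by rewrite /Phi !hornerE; ring.
- by rewrite derivB hP hQ /= IH subrr.
- transitivity (Phi (P n.+1) - Phi (Q n.+1)); last by rewrite hPhi subrr.
  by rewrite /Phi !hornerE; ring.
Qed.
End Appell.
Section Gen.
Variable F : numFieldType.

Lemma sum_rev (f : nat -> F) n :
  \sum_(k < n.+1) 'C(n, k)%:R * f (n - k)%N = \sum_(k < n.+1) 'C(n, k)%:R * f k.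
Proof.
rewrite (reindex_inj rev_ord_inj) /=; apply: eq_bigr => k _.
have hk := ltn_ord k.
by rewrite subSS subKn ?bin_sub //.
Qed.

Lemma sum_z_l (f : nat -> F) n :
  \sum_(a < n.+1) (0 : F) ^+ a * f (n - a)%N = f n.
Proof.
rewrite big_ord_recl /= expr0 mul1r subn0 big1 ?addr0 // => i _.
by rewrite expr0n /= mul0r.
Qed.

Lemma sum_z_r (f : nat -> F) n :
  \sum_(a < n.+1) f a * (0 : F) ^+ (n - a)%N = f n.
Proof.
rewrite big_ord_recr /= subnn expr0 mulr1 big1 ?add0r // => i _.
have hi := ltn_ord i.
by rewrite expr0n /= subn_eq0 leqNgt hi mulr0.
Qed.

Lemma seq_uniq (lam : F) (f g : nat -> F) : lam != 1 ->
  (forall n, \sum_(k < n.+1) 'C(n, k)%:R * f k - lam * f n =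
             \sum_(k < n.+1) 'C(n, k)%:R * g k - lam * g n) ->
  forall n, f n = g n.
Proof.
move=> hl e n; elim/ltn_ind: n => n IH.
move: (e n); rewrite !big_ord_recr /= binn.
rewrite (eq_bigr (fun k : 'I_n => 'C(n, k)%:R * g k)); last first.
  by move=> k _; rewrite IH.
move=> /eqP; rewrite -!addrA (inj_eq (addrI _)) -/(_ - _) => /eqP e2.
have : (1 - lam) * f n = (1 - lam) * g n.
  by rewrite !mulrBl !mul1r; move: e2; rewrite !mul1r.
apply: mulfI; by rewrite subr_eq0 eq_sym.
Qed.
End Gen.

Section Main.
Variable R : realType.
Variable lam : R[i].
Variable H : nat -> R[i] -> R[i].
Hypothesis hl : lam != 1.
Hypothesis hF : FE_gen lam H.

Let h := FE_num H.

Lemma fe0 k : \sum_(j < k.+1) 'C(k, j)%:R * h j = lam * h k + (1 - lam) * 0 ^+ k.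
Proof. by move: (hF 0 k); rewrite /h /FE_num => <-; ring. Qed.

Lemma h0 : h 0%N = 1.
Proof.
move: (fe0 0); rewrite big_ord_recl big_ord0 addr0 bin0 mul1r expr0 mulr1 => e.
have : (1 - lam) * h 0%N = (1 - lam) * 1 by rewrite mulrBl mul1r {1}e; ring.
by apply: mulfI; rewrite subr_eq0 eq_sym.
Qed.

Definition Hp := conv h (fun n => 'X^n).

Lemma appell_Hp : appell Hp.
Proof. exact: appell_conv (@appell_X _). Qed.

Lemma Phi_conv c P n : Phi lam (conv c P n) = \sum_(k < n.+1) ('C(n, k)%:R * c (n - k)%N) * Phi lam (P k).
Proof.
rewrite /Phi /conv !horner_sum mulr_sumr -sumrB; apply: eq_bigr => k _.
by rewrite !hornerZ; ring.
Qed.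

Lemma Hp1 n : (Hp n).[1] = lam * h n + (1 - lam) * 0 ^+ n.
Proof.
rewrite -fe0 /Hp /conv horner_sum -sum_rev; apply: eq_bigr => k _.
by rewrite hornerZ hornerXn expr1n mulr1.
Qed.

Lemma Hp0 n : (Hp n).[0] = h n.
Proof.
rewrite /Hp /conv horner_sum.
rewrite big_ord_recl /= big1 ?addr0 => [|k _].
  by rewrite hornerZ hornerXn expr0 mulr1 bin0 mul1r subn0.
by rewrite hornerZ hornerXn expr0n /= mulr0.
Qed.

Lemma Phi_Hp n : Phi lam (Hp n) = (1 - lam) * 0 ^+ n.
Proof. by rewrite /Phi Hp1 Hp0; ring. Qed.

Lemma Hp_rec n x :
  \sum_(k < n.+1) 'C(n, k)%:R * (Hp k).[x] - lam * (Hp n).[x] = (1 - lam) * x ^+ n.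
Proof.
pose V n := conv (fun _ => 1) Hp n + (- lam) *: Hp n.
pose U n := (1 - lam) *: ('X^n : {poly R[i]}).
have aV : appell V.
  exact: appell_add (appell_conv _ appell_Hp) (appell_scale _ appell_Hp).
have aU : appell U by apply: appell_scale; apply: appell_X.
have e := appell_uniq hl aV aU.
have {}e : forall n, V n = U n.
  apply: e => m; rewrite /V /U.
  rewrite Phi_add Phi_scale.
  rewrite Phi_conv Phi_Hp.
  under eq_bigr => k _ do rewrite Phi_Hp mulr1 mulrCA.
  rewrite -mulr_sumr big_ord_recl big1 => [|k _]; last by rewrite expr0n /= mulr0.
  rewrite Phi_scale /Phi !hornerXn expr1n expr0 bin0 addr0.
  ring.
move: (congr1 (fun p => p.[x]) (e n)); rewrite /V /U !hornerE /conv horner_sum.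
under eq_bigr => k _ do rewrite hornerZ mulr1.
by move=> <-; ring.
Qed.

Lemma H_Hp x n : H n x = (Hp n).[x].
Proof.
apply: (@seq_uniq _ lam (fun n => H n x) (fun n => (Hp n).[x]) hl) => m.
by rewrite hF Hp_rec.
Qed.

Definition c' m := if m == 0%N then 1
  else (- lam * \sum_(l < m.+1) h l * h (m - l)%N + 2 * lam * h m) / m.+1%:R.
Definition Pp n := (n.+1%:R)^-1 *: sprod Hp Hp n.
Definition Qq n := conv c' Hp n.

Lemma PpQq n : Pp n = Qq n.
Proof.
apply: (appell_uniq hl).
- exact: appell_sprod appell_Hp appell_Hp.
- exact: appell_conv appell_Hp.
move=> m; rewrite Phi_conv.
under eq_bigr => k _ do rewrite Phi_Hp.
rewrite big_ord_recl big1 => [|k _]; last by rewrite expr0n /= !mulr0.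
rewrite addr0 bin0 subn0 expr0 mulr1 mul1r /Pp Phi_scale /Phi /sprod !horner_sum.
under eq_bigr => a _ do rewrite hornerM !Hp1.
under [X in _ * (_ - _ * X)]eq_bigr => a _ do rewrite hornerM !Hp0.
rewrite mulr_sumr -sumrB.
rewrite (eq_bigr (fun a : 'I_m.+1 =>
   (lam * lam - lam) * (h a * h (m - a)%N) + lam * (1 - lam) * (h a * 0 ^+ (m - a))
   + lam * (1 - lam) * (0 ^+ a * h (m - a)%N) + (1 - lam) ^+ 2 * (0 ^+ a * 0 ^+ (m - a))));
  last by move=> a _; ring.
rewrite !big_split /= -!mulr_sumr sum_z_r sum_z_l (sum_z_l (fun k => 0 ^+ k)).
case: m => [|m].
  by rewrite /c' /= big_ord_recl big_ord0 subnn h0 invr1 expr0; ring.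
rewrite /c' /= expr0n /=.
field; by rewrite -natrD pnatr_eq0.
Qed.

End Main.

Unset Implicit Arguments.
Theorem theorem3 (R : realType) (lam : R[i]) (H : nat -> R[i] -> R[i]) :
  lam != 1 -> FE_gen lam H ->
  forall (n : nat) (x : R[i]),
    (n.+1)%:R^-1 * \sum_(k < n.+1) H k x * H (n - k)%N x =
    \sum_(k < n)
       ('C(n, k)%:R / (n - k + 1)%:R) *
       (- lam * (\sum_(k <= l < n.+1) FE_num H (l - k) * FE_num H (n - l))
        + 2 * lam * FE_num H (n - k)) * H k x
    + H n x.
Proof.
move=> hl hF n x.
transitivity (Pp H n).[x].
  rewrite /Pp hornerZ /sprod horner_sum; congr (_ * _); apply: eq_bigr => k _.
  by rewrite hornerM -!(H_Hp hl hF).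
rewrite (PpQq hl hF) /Qq /conv horner_sum big_ord_recr /= binn subnn hornerZ.
rewrite /c' eqxx mul1r mul1r -(H_Hp hl hF); congr (_ + _).
apply: eq_bigr => k _; rewrite hornerZ -(H_Hp hl hF); congr (_ * _).
have hk := ltn_ord k.
have -> : (n - k == 0)%N = false by rewrite subn_eq0 leqNgt hk.
have -> : \sum_(k <= l < n.+1) FE_num H (l - k) * FE_num H (n - l) =
          \sum_(l < (n - k).+1) FE_num H l * FE_num H (n - k - l).
  rewrite -{1}(add0n k) big_addn big_mkord (_ : n.+1 - k = (n - k).+1)%N; last by lia.
  apply: eq_bigr => l _; rewrite addnK; congr (_ * FE_num H _); lia.
by rewrite addn1; ring.
Qed.
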